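(* For all $Y,Z\in\mathbb{N}^\mathbb{N}$, the following are equivalent: (1) $Y=\mathcal{J}^\omega(Z)$; (2) for every $n$ there exists a finite string $\sigma_n\subset Z$ with $|\sigma_n|>n$ such that $Y\restriction n=J^\omega(\sigma_n)$.
   Context: Strings are coded by natural numbers via a fixed computable coding with $\sigma\subsetneq\tau$ implying code$(\sigma)<$ code$(\tau)$. For $\sigma$ finite or infinite, $\{e\}^\sigma_t(n)\downarrow$ means the $e$-th machine on input $n$ with oracle $\sigma$ halts in fewer than $\min(|\sigma|,t)$ steps. For $Z\in\mathbb{N}^\mathbb{N}$: $t_{-1}=1$, $t_n=\max\{t_{n-1}+1,\mu t(\{n\}^Z_t(n)\downarrow)\}$ ($t_n=t_{n-1}+1$ if no such $t$), $\mathcal{J}(Z)(n)=Z\restriction t_n$, and $\mathcal{J}^\omega(Z)(n)=\mathcal{J}^{n+1}(Z)(0)$. For finite $\sigma$: $t_{-1}=1$, $t_n=\max\{t_{n-1}+1,\mu t(\{n\}^{\sigma\restriction t}(n)\downarrow)\}$ ($t_n=t_{n-1}+1$ if no such $t$), $J(\sigma)=\langle\sigma\restriction t_0,\dots,\sigma\restriction t_{k-1}\rangle$ with $k$ least such that $t_k>|\sigma|$; $J^m$ is the $m$-fold iterate (entries of strings being codes of strings); and $J^\omega(\sigma)=\langle J(\sigma)(0),J^2(\sigma)(0),\dots,J^{n-1}(\sigma)(0)\rangle$ where $n$ is least with $J^n(\sigma)=\emptyset$. *)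

(* Defs.v *)
From Stdlib Require Import ClassicalEpsilon.
From mathcomp Require Import all_boot.
Set Implicit Arguments. Unset Strict Implicit. Unset Printing Implicit Defensive.

(* Machine model:
   [halt e n tau] = the e-th oracle machine on input n, run with the finite
   oracle string tau, halts in fewer than [size tau] steps (and so only reads
   tau).  Thus {e}^sigma_t(n)|  (sigma finite or infinite) is
   [halt e n (sigma |` min(|sigma|,t))].
   Strings are coded by [code : seq nat -> nat]. *)

Definition mu (P : pred nat) : option nat :=
  match excluded_middle_informative (exists t, P t) with
  | left H => Some (ex_minn H)
  | right _ => None
  end.

Definition restr (Z : nat -> nat) (t : nat) : seq nat := mkseq Z t.

Section Jump.
Variable code : seq nat -> nat.
Variable halt : nat -> nat -> seq nat -> bool.

(* tinf Z n = t_{n-1}; so t_n = tinf Z n.+1, t_{-1} = 1 *)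
Fixpoint tinf (Z : nat -> nat) (n : nat) : nat :=
  match n with
  | 0 => 1
  | m.+1 =>
      match mu (fun t => halt m m (restr Z t)) with
      | Some s => maxn (tinf Z m).+1 s
      | None => (tinf Z m).+1
      end
  end.

Definition calJ (Z : nat -> nat) : nat -> nat :=
  fun n => code (restr Z (tinf Z n.+1)).

Definition calJomega (Z : nat -> nat) : nat -> nat :=
  fun n => iter n.+1 calJ Z 0.

(* tfin s n = t_{n-1} *)
Fixpoint tfin (s : seq nat) (n : nat) : nat :=
  match n with
  | 0 => 1
  | m.+1 =>
      match mu (fun t => halt m m (take t s)) with
      | Some u => maxn (tfin s m).+1 u
      | None => (tfin s m).+1
      end
  end.

Lemma tfin_ge s n : n < tfin s n.
Proof.
elim: n => [//|n IH] /=.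
case: (mu _) => [u|]; last by [].
by apply: leq_trans (leq_maxl _ _).
Qed.

Lemma kJ_ex s : exists k, size s < tfin s k.+1.
Proof. by exists (size s); apply: leq_trans (tfin_ge s _). Qed.

Definition kJ (s : seq nat) : nat := ex_minn (kJ_ex s).

Definition Jfin (s : seq nat) : seq nat :=
  [seq code (take (tfin s i.+1) s) | i <- iota 0 (kJ s)].

Lemma size_Jfin s : size (Jfin s) <= (size s).-1.
Proof.
rewrite size_map size_iota /kJ; case: ex_minnP => k _ Hmin.
apply: Hmin; case: s => [|x s] /=; first exact: ltnW (tfin_ge [::] 1).
exact: tfin_ge.
Qed.

Lemma nJ_ex s : exists n, iter n Jfin s == [::].
Proof.
exists (size s).
suff H : forall m, size (iter m Jfin s) <= size s - m.
  by have := H (size s); rewrite subnn leqn0 size_eq0.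
elim=> [|m IH] /=; first by rewrite subn0.
apply: leq_trans (size_Jfin _) _.
by rewrite subnS -!subn1 leq_sub2r.
Qed.

Definition nJ (s : seq nat) : nat := ex_minn (nJ_ex s).

Definition Jomega (s : seq nat) : seq nat :=
  [seq head 0 (iter i Jfin s) | i <- iota 1 (nJ s).-1].

End Jump.

(* Main.v *)
Require Import Defs.
From Stdlib Require Import ClassicalEpsilon.
From mathcomp Require Import all_boot.

Lemma mu_some (P : pred nat) u : mu P = Some u -> P u /\ forall t, P t -> u <= t.
Proof.
rewrite /mu; case: excluded_middle_informative => // H [<-].
case: ex_minnP => m Pm Hm; split => //.
Qed.

Lemma mu_none (P : pred nat) : mu P = None -> forall t, ~~ P t.
Proof.
rewrite /mu; case: excluded_middle_informative => // H _ t.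
by apply/negP => Pt; apply: H; exists t.
Qed.

Lemma tinf_ge halt X n : n < tinf halt X n.
Proof.
elim: n => [//|n IH] /=.
case: (mu _) => [u|]; last by [].
by apply: leq_trans (leq_maxl _ _).
Qed.

Lemma tinf_S halt X n : tinf halt X n < tinf halt X n.+1.
Proof. by rewrite /=; case: (mu _) => [u|] //; rewrite leq_max leqnn. Qed.

Lemma tfin_S halt s n : tfin halt s n < tfin halt s n.+1.
Proof. by rewrite /=; case: (mu _) => [u|] //; rewrite leq_max leqnn. Qed.

Lemma tinf_mono halt X m n : m <= n -> tinf halt X m <= tinf halt X n.
Proof.
move=> /subnKC <-; elim: (n - m) => [|k IH]; first by rewrite addn0.
by rewrite addnS; apply: leq_trans IH (ltnW (tinf_S _ _ _)).
Qed.

Lemma tfin_mono halt s m n : m <= n -> tfin halt s m <= tfin halt s n.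
Proof.
move=> /subnKC <-; elim: (n - m) => [|k IH]; first by rewrite addn0.
by rewrite addnS; apply: leq_trans IH (ltnW (tfin_S _ _ _)).
Qed.

Lemma size_Jfin' code halt s : size (Jfin code halt s) = kJ halt s.
Proof. by rewrite size_map size_iota. Qed.

Lemma nth_Jfin code halt s i : i < kJ halt s ->
  nth 0 (Jfin code halt s) i = code (take (tfin halt s i.+1) s).
Proof. by move=> Hi; rewrite (nth_map 0) ?size_iota // nth_iota. Qed.

Lemma tfin_le_size halt s i : i < kJ halt s -> tfin halt s i.+1 <= size s.
Proof.
rewrite /kJ; case: ex_minnP => k _ Hm Hi.
by rewrite leqNgt; apply/negP => /Hm; rewrite leqNgt Hi.
Qed.

Lemma take_restr X a b : a <= b -> take a (restr X b) = restr X a.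
Proof.
move=> ab; apply: (@eq_from_nth _ 0).
  by rewrite size_take !size_mkseq; case: ltngtP ab => // ->.
move=> i; rewrite size_take size_mkseq => Hi.
have Hia : i < a by move: Hi; by rewrite leq_min => /andP[].
by rewrite nth_take // !nth_mkseq //; apply: leq_trans ab.
Qed.
Lemma mu_agree (P Q : pred nat) B : (forall t, t <= B -> P t = Q t) ->
  (forall u, mu P = Some u -> u <= B) -> (forall u, mu Q = Some u -> u <= B) ->
  mu P = mu Q.
Proof.
move=> PQ HP HQ.
case EP: (mu P) => [u|]; case EQ: (mu Q) => [v|] //.
- have uB := HP _ EP; have vB := HQ _ EQ.
  have [Pu mu_] := @mu_some _ _ EP; have [Qv mv] := @mu_some _ _ EQ.
  rewrite (PQ _ uB) in Pu; rewrite -(PQ _ vB) in Qv.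
  by congr Some; apply/eqP; rewrite eqn_leq (mu_ _ Qv) (mv _ Pu).
- have uB := HP _ EP; have [Pu _] := @mu_some _ _ EP.
  by have := @mu_none _ EQ u; rewrite -(PQ _ uB) Pu.
- have vB := HQ _ EQ; have [Qv _] := @mu_some _ _ EQ.
  by have := @mu_none _ EP v; rewrite (PQ _ vB) Qv.
Qed.

Lemma mu_tinf_le halt X j v :
  mu (fun t => halt j j (restr X t)) = Some v -> v <= tinf halt X j.+1.
Proof. by move=> /= ->; rewrite leq_max leqnn orbT. Qed.

Lemma mu_tfin_le halt s j v :
  mu (fun t => halt j j (take t s)) = Some v -> v <= tfin halt s j.+1.
Proof. by move=> /= ->; rewrite leq_max leqnn orbT. Qed.

Lemma take_restr' X a b : take a (restr X b) = restr X (minn a b).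
Proof.
case: (leqP a b) => ab; first by rewrite take_restr.
by rewrite take_oversize // size_mkseq ltnW.
Qed.

Lemma tfin_good halt X i j : j <= i.+1 ->
  tfin halt (restr X (tinf halt X i.+1)) j = tinf halt X j.
Proof.
set T := tinf halt X i.+1.
elim: j => [//|j IH] Hj /=.
rewrite IH ?(ltnW Hj) //.
rewrite (@mu_agree _ (fun t => halt j j (restr X t)) T).
- by [].
- by move=> t tT; rewrite take_restr.
- move=> u /mu_some [Hu Hm].
  apply: leq_trans (Hm (minn u T) _) (geq_minr _ _).
  by rewrite take_restr' in Hu; rewrite take_restr' -minnA minnn.
- move=> v /mu_tinf_le Hv; apply: leq_trans Hv _.
  by apply: tinf_mono.
Qed.

Lemma kJ_good halt X i : kJ halt (restr X (tinf halt X i.+1)) = i.+1.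
Proof.
rewrite /kJ; case: ex_minnP => k Hk Hm.
apply/eqP; rewrite eqn_leq; apply/andP; split.
- apply: Hm; rewrite size_mkseq.
  rewrite -{1}(@tfin_good halt X i i.+1) //; exact: tfin_S.
- move: Hk; rewrite size_mkseq; case: (leqP i.+1 k) => // ki.
  by rewrite tfin_good // ltnNge tinf_mono.
Qed.

Lemma Jfin_good code halt X i :
  Jfin code halt (restr X (tinf halt X i.+1)) = restr (calJ code halt X) i.+1.
Proof.
apply: (@eq_from_nth _ 0); first by rewrite size_Jfin' kJ_good size_mkseq.
move=> q; rewrite size_Jfin' kJ_good => Hq.
rewrite nth_Jfin ?kJ_good // nth_mkseq // tfin_good // take_restr //.
by apply: tinf_mono.
Qed.

Lemma Jfin_one code halt X : Jfin code halt (restr X 1) = [::].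
Proof.
apply/eqP; rewrite -size_eq0 size_Jfin' /kJ; case: ex_minnP => k _ Hm.
rewrite -leqn0; apply: Hm; rewrite size_mkseq; exact: (tfin_ge halt _ 1).
Qed.

Lemma build code halt n X : exists L, n < L /\
  (forall m, m <= n -> exists L', 0 < L' /\
     iter m (Jfin code halt) (restr X L) = restr (iter m (calJ code halt) X) L') /\
  iter n.+1 (Jfin code halt) (restr X L) = [::].
Proof.
elim: n X => [|n IH] X.
  exists 1; split => //; split; last by rewrite /= Jfin_one.
  by move=> m; rewrite leqn0 => /eqP ->; exists 1.
have [L1 [HL1 [Hm Hn]]] := IH (calJ code halt X).
case: L1 HL1 Hm Hn => [//|i] HL1 Hm Hn.
exists (tinf halt X i.+1); split.
  by apply: leq_ltn_trans HL1 (tinf_ge _ _ _).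
have HJ := Jfin_good code halt X i.
split.
  case=> [_|m Hmn]; first by exists (tinf halt X i.+1); split => //; apply: leq_trans (tinf_ge _ _ _).
  have [L' [HL' E]] := Hm m Hmn.
  by exists L'; split => //; rewrite iterSr HJ E -iterSr.
by rewrite iterSr HJ.
Qed.

Lemma nJ_eq code halt s n : (forall m, m <= n -> iter m (Jfin code halt) s != [::]) ->
  iter n.+1 (Jfin code halt) s = [::] -> nJ code halt s = n.+1.
Proof.
move=> Hne He; rewrite /nJ; case: ex_minnP => k Hk Hm.
apply/eqP; rewrite eqn_leq Hm ?He //=.
by rewrite ltnNge; apply/negP => /Hne; rewrite Hk.
Qed.

Lemma iter_ne code halt s m : m < nJ code halt s -> iter m (Jfin code halt) s != [::].
Proof.
rewrite /nJ; case: ex_minnP => k _ Hm Hmk.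
by apply/negP => /Hm; rewrite leqNgt Hmk.
Qed.

Lemma size_Jomega code halt s : size (Jomega code halt s) = (nJ code halt s).-1.
Proof. by rewrite size_map size_iota. Qed.

Lemma nth_Jomega code halt s k : k < (nJ code halt s).-1 ->
  nth 0 (Jomega code halt s) k = head 0 (iter k.+1 (Jfin code halt) s).
Proof. by move=> Hk; rewrite (nth_map 0) ?size_iota // nth_iota. Qed.

Lemma dir1 code halt (Y Z : nat -> nat) :
  (forall n, Y n = calJomega code halt Z n) ->
  (forall n : nat, exists sigma : seq nat,
      sigma = restr Z (size sigma) /\ n < size sigma /\
      restr Y n = Jomega code halt sigma).
Proof.
move=> HY n.
have [L [HL [Hm Hn]]] := build code halt n Z.
exists (restr Z L); rewrite size_mkseq; split => //; split => //.
have HnJ : nJ code halt (restr Z L) = n.+1.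
  apply: nJ_eq Hn => m /Hm [L' [HL' ->]].
  by rewrite -size_eq0 size_mkseq -lt0n.
apply: (@eq_from_nth _ 0); first by rewrite size_Jomega HnJ size_mkseq.
move=> k; rewrite size_mkseq => Hk.
rewrite nth_Jomega ?HnJ // nth_mkseq // HY.
have [L' [HL' ->]] := Hm k.+1 Hk.
by rewrite -nth0 nth_mkseq.
Qed.

Definition valid code halt (Y Z : nat -> nat) n (s : seq nat) :=
  s = restr Z (size s) /\ n < size s /\ restr Y n = Jomega code halt s.

Lemma valid_nJ code halt Y Z n s : valid code halt Y Z n s -> 0 < n ->
  nJ code halt s = n.+1.
Proof.
move=> [_ [_ E]] n0; have := congr1 size E.
rewrite size_mkseq size_Jomega => En; move: n0; rewrite En.
by case: (nJ code halt s).
Qed.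

Arguments valid_nJ {code halt Y Z n s}.

Lemma valid_head code halt Y Z n s k : valid code halt Y Z n s -> k < n ->
  head 0 (iter k.+1 (Jfin code halt) s) = Y k /\ iter k.+1 (Jfin code halt) s != [::].
Proof.
move=> V kn; have HnJ := valid_nJ V (leq_ltn_trans (leq0n k) kn).
have [_ [_ E]] := V.
split; last by apply: iter_ne; rewrite HnJ.
by rewrite -nth_Jomega ?HnJ // -E nth_mkseq.
Qed.

Arguments valid_head {code halt Y Z n s k}.

Lemma Det code halt (code_inj : injective code) s s' a : 0 < a ->
  a <= size (Jfin code halt s) -> a <= size (Jfin code halt s') ->
  take a (Jfin code halt s) = take a (Jfin code halt s') ->
  a < size s /\ a < size s' /\ take a.+1 s = take a.+1 s'.
Proof.
case: a => [//|b] _; rewrite !size_Jfin' => Hb Hb' E.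
have := congr1 (fun x => nth 0 x b) E => /=.
rewrite !nth_take // !nth_Jfin // => /code_inj E2.
have T1 := @tfin_le_size _ _ _ Hb; have T2 := @tfin_le_size _ _ _ Hb'.
have ET : tfin halt s b.+1 = tfin halt s' b.+1.
  by have := congr1 size E2; rewrite !size_takel.
have G := tfin_ge halt s b.+1; have G' := tfin_ge halt s' b.+1.
split; first exact: leq_trans G T1.
split; first exact: leq_trans G' T2.
by rewrite -(take_takel _ G) E2 take_takel // -ET.
Qed.

Lemma Dets code halt (code_inj : injective code) Y Z n n' s s' k d :
  valid code halt Y Z n s -> valid code halt Y Z n' s' -> k < n -> k < n' -> d <= k ->
  take d.+1 (iter (k.+1 - d) (Jfin code halt) s) = take d.+1 (iter (k.+1 - d) (Jfin code halt) s')
  /\ d < size (iter (k.+1 - d) (Jfin code halt) s) /\ d < size (iter (k.+1 - d) (Jfin code halt) s').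
Proof.
move=> V V' kn kn'; elim: d => [_|d IH dk].
  rewrite subn0; have [h1 ne1] := valid_head V kn; have [h2 ne2] := valid_head V' kn'.
  move: h1 h2 ne1 ne2.
  case: (iter k.+1 (Jfin code halt) s) => [|x l] //; case: (iter k.+1 (Jfin code halt) s') => [|x' l'] //= -> ->.
  by rewrite !take0.
have [E [S1 S2]] := IH (ltnW dk).
move: E S1 S2; rewrite subSn ?(ltnW dk) // !iterS subSS => E S1 S2.
have [A1 [A2 A3]] := @Det code halt code_inj _ _ d.+1 erefl S1 S2 E.
by [].

Qed.

Lemma Agree halt s X P j : take P s = restr X P -> tinf halt X j <= P ->
  tfin halt s j <= P -> forall j', j' <= j -> tfin halt s j' = tinf halt X j'.
Proof.
move=> EP Ti Tf; elim=> [//|i IH] Hj /=.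
rewrite IH ?(ltnW Hj) //.
rewrite (@mu_agree _ (fun t => halt i i (restr X t)) P).
- by [].
- by move=> t tP; rewrite -(take_takel _ tP) EP take_restr.
- move=> u /mu_tfin_le Hu; apply: leq_trans Hu (leq_trans _ Tf).
  exact: tfin_mono.
- move=> v /mu_tinf_le Hv; apply: leq_trans Hv (leq_trans _ Ti).
  exact: tinf_mono.
Qed.

Lemma conv code halt (code_inj : injective code) (Y Z : nat -> nat) :
  (forall n, exists s, valid code halt Y Z n s) ->
  forall m p, exists N, forall n s, N <= n -> valid code halt Y Z n s ->
    p <= size (iter m (Jfin code halt) s) /\
    take p (iter m (Jfin code halt) s) = restr (iter m (calJ code halt) Z) p.
Proof.
move=> H2; elim=> [|m IH] p.
  exists p => n s pn [Hs [ns _]] /=.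
  have pL : p <= size s by apply: leq_trans pn (ltnW ns).
  by split => //; rewrite Hs take_restr // size_mkseq.
case: p => [|p']; first by exists 0 => n s _ _; rewrite take0.
set p := p'.+1.
have [s0 V0] := H2 (m + p).+1.
set s0m := iter m (Jfin code halt) s0.
set X := iter m (calJ code halt) Z.
set Pb := maxn (tfin halt s0m p) (tinf halt X p).
have [N2 HN2] := IH Pb.
exists (maxn (m + p).+1 N2) => n s; rewrite geq_max => /andP [N1n N2n] V.
have [E [S1 S2]] := @Dets code halt code_inj Y Z n _ s s0 (m + p) p V V0 N1n (leqnn _) (leq_addl m p).
move: E S1 S2; rewrite subSn ?leq_addl // addnK !iterS -/s0m => E S1 S2.
set sm := iter m (Jfin code halt) s.
have [HPb EPb] := HN2 n s N2n V.
rewrite -/sm -/X in HPb EPb.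
rewrite ?iterS -/X -/sm.
have kp : p <= kJ halt sm by rewrite -(size_Jfin' code) ltnW.
have kp0 : p' < kJ halt s0m by rewrite -(size_Jfin' code); exact: ltnW.
rewrite -/sm in E S1.
have Etf : tfin halt sm p = tfin halt s0m p.
  have := congr1 (fun x => nth 0 x p') E => /=.
  rewrite !nth_take // !nth_Jfin // => /code_inj E2.
  by have := congr1 size E2; rewrite !size_takel // tfin_le_size.
have tfP : tfin halt sm p <= Pb by rewrite Etf leq_max leqnn.
have Ag := @Agree halt sm X Pb p EPb (leq_maxr _ _) tfP.
split; first by rewrite size_Jfin'.
apply: (@eq_from_nth _ 0); first by rewrite size_takel ?size_mkseq // size_Jfin'.
move=> q; rewrite size_takel ?size_Jfin' // => qp.
have qk : q < kJ halt sm by apply: leq_trans qp kp.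
rewrite nth_take // nth_Jfin // nth_mkseq // Ag //.
have tq : tinf halt X q.+1 <= Pb.
  by apply: leq_trans (@tinf_mono halt X _ _ qp) (leq_maxr _ _).
by rewrite /calJ -(take_takel _ tq) EPb take_restr.
Qed.

Theorem lemma5p11
  (code : seq nat -> nat)
  (halt : nat -> nat -> seq nat -> bool)
  (code_inj : injective code)
  (code_mono : forall s u : seq nat, u != [::] -> code s < code (s ++ u))
  (halt_mono : forall (e n : nat) (s u : seq nat), halt e n s -> halt e n (s ++ u))
  (Y Z : nat -> nat) :
  (forall n, Y n = calJomega code halt Z n) <->
  (forall n : nat, exists sigma : seq nat,
      sigma = restr Z (size sigma) /\ n < size sigma /\
      restr Y n = Jomega code halt sigma).
Proof.
split; first exact: dir1.
move=> H2 j.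
have H2' : forall n, exists s, valid code halt Y Z n s by exact: H2.
have [N HN] := @conv code halt code_inj Y Z H2' j.+1 1.
have [s V] := H2' (maxn N j.+1).
have [_ E] := HN _ s (leq_maxl _ _) V.
have [Hh _] := valid_head V (leq_maxr N j.+1).
rewrite -Hh /calJomega.
move: E; case: (iter j.+1 (Jfin code halt) s) => [|x l] /=.
  by move=> /(congr1 size); rewrite size_mkseq.
by rewrite take0 /restr /mkseq /= => -[->].
Qed.
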